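(* Let $Q\in\mathbb{R}^{n\times n}$ be symmetric nonsingular with eigenvalues $\lambda_1\ge\dots\ge\lambda_{n-1}>0>\lambda_n$ and orthonormal eigenvectors $u_1,\dots,u_n$ ($Qu_i=\lambda_iu_i$), let $\mathcal{C_L}=\{x: x^TQx\le0,\ x^TQu_n\le0\}$, and let $A\in\mathbb{R}^{n\times n}$. Then $\mathcal{C_L}$ is an invariant set for the discrete system $x_{k+1}=Ax_k$ (i.e., $A\mathcal{C_L}\subseteq\mathcal{C_L}$) if and only if there exists $\mu\ge0$ such that $$A^TQA-\mu Q\preceq0,\qquad u_n^TAu_n\ge0,\qquad u_n^TAQ^{-1}A^Tu_n\le0.$$ The same conditions characterize invariance of $-\mathcal{C_L}$.
   Context: $\preceq0$ denotes negative semidefiniteness. *)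

(* Defs.v *)
(* Real numbers are modelled by an arbitrary real closed field. *)
From HB Require Import structures.
From mathcomp Require Import all_boot all_order all_algebra.
Set Implicit Arguments. Unset Strict Implicit. Unset Printing Implicit Defensive.
Import Order.TTheory GRing.Theory Num.Theory.
Local Open Scope ring_scope.

Definition bilin (R : rcfType) (n : nat) (x : 'cV[R]_n) (M : 'M[R]_n) (y : 'cV[R]_n) : R :=
  (x^T *m M *m y) 0 0.

Definition nsd (R : rcfType) (n : nat) (M : 'M[R]_n) : Prop :=
  M^T = M /\ forall x : 'cV[R]_n, bilin x M x <= 0.

Definition CL (R : rcfType) (n : nat) (Q : 'M[R]_n) (un : 'cV[R]_n) (x : 'cV[R]_n) : Prop :=
  bilin x Q x <= 0 /\ bilin x Q un <= 0.

Definition negCL (R : rcfType) (n : nat) (Q : 'M[R]_n) (un : 'cV[R]_n) (x : 'cV[R]_n) : Prop :=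
  CL Q un (- x).

Definition invariant_set (R : rcfType) (n : nat) (S : 'cV[R]_n -> Prop) (A : 'M[R]_n) : Prop :=
  forall x, S x -> S (A *m x).

(* Main.v *)
Require Import Defs.
From HB Require Import structures.
From mathcomp Require Import all_boot all_order all_algebra.
From mathcomp Require Import spectral sesquilinear.
From mathcomp.real_closed Require Import complex polyrcf.
From mathcomp Require Import ring lra.
From Stdlib Require Classical_Prop.
Import Order.TTheory GRing.Theory Num.Theory.
Set Implicit Arguments. Unset Strict Implicit. Unset Printing Implicit Defensive.
Local Open Scope ring_scope.

Section Dot.
Variable R : rcfType.

Definition dot n (a b : 'cV[R]_n) : R := (a^T *m b) 0 0.

Lemma dotE n (a b : 'cV[R]_n) : dot a b = \sum_i a i 0 * b i 0.
Proof. by rewrite /dot mxE; apply: eq_bigr => i _; rewrite mxE. Qed.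

Lemma dotC n (a b : 'cV[R]_n) : dot a b = dot b a.
Proof. by rewrite !dotE; apply: eq_bigr => i _; rewrite mulrC. Qed.

Lemma dotDl n (a b c : 'cV[R]_n) : dot (a + b) c = dot a c + dot b c.
Proof. by rewrite !dotE -big_split; apply: eq_bigr => i _; rewrite mxE mulrDl. Qed.

Lemma dotDr n (a b c : 'cV[R]_n) : dot c (a + b) = dot c a + dot c b.
Proof. by rewrite ![dot c _]dotC dotDl. Qed.

Lemma dotZl n k (a c : 'cV[R]_n) : dot (k *: a) c = k * dot a c.
Proof. by rewrite !dotE mulr_sumr; apply: eq_bigr => i _; rewrite mxE mulrA. Qed.

Lemma dotZr n k (a c : 'cV[R]_n) : dot c (k *: a) = k * dot c a.
Proof. by rewrite ![dot c _]dotC dotZl. Qed.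

Lemma dotNl n (a c : 'cV[R]_n) : dot (- a) c = - dot a c.
Proof. by rewrite -scaleN1r dotZl mulN1r. Qed.

Lemma dotNr n (a c : 'cV[R]_n) : dot c (- a) = - dot c a.
Proof. by rewrite ![dot c _]dotC dotNl. Qed.

Lemma dotBl n (a b c : 'cV[R]_n) : dot (a - b) c = dot a c - dot b c.
Proof. by rewrite dotDl dotNl. Qed.

Lemma dotBr n (a b c : 'cV[R]_n) : dot c (a - b) = dot c a - dot c b.
Proof. by rewrite dotDr dotNr. Qed.

Lemma dot0l n (c : 'cV[R]_n) : dot 0 c = 0.
Proof. by rewrite dotE big1 // => i _; rewrite mxE mul0r. Qed.

Lemma dot0r n (c : 'cV[R]_n) : dot c 0 = 0.
Proof. by rewrite dotC dot0l. Qed.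

Lemma dot_mul n (a b : 'cV[R]_n) (M : 'M[R]_n) : dot a (M *m b) = dot (M^T *m a) b.
Proof. by rewrite /dot trmx_mul trmxK mulmxA. Qed.

Lemma dot_mulS n (a b : 'cV[R]_n) (M : 'M[R]_n) : M^T = M -> dot a (M *m b) = dot b (M *m a).
Proof. by move=> MT; rewrite dot_mul MT dotC. Qed.

Lemma dot_ge0 n (a : 'cV[R]_n) : 0 <= dot a a.
Proof. by rewrite dotE sumr_ge0 // => i _; rewrite -expr2 sqr_ge0. Qed.

Lemma dot_eq0 n (a : 'cV[R]_n) : dot a a = 0 -> a = 0.
Proof.
rewrite dotE => H; apply/matrixP => i j; rewrite (ord1 j) mxE.
have /eqP := H; rewrite psumr_eq0; last by move=> k _; rewrite -expr2 sqr_ge0.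
move=> /allP /(_ i (mem_index_enum i)) /=.
by rewrite -expr2 sqrf_eq0 => /eqP.
Qed.

Lemma form_dot n (a b : 'cV[R]_n) (M : 'M[R]_n) : (a^T *m M *m b) 0 0 = dot a (M *m b).
Proof. by rewrite /dot mulmxA. Qed.

End Dot.

Section TopEig.
Variable R : rcfType.
Local Notation C := (R[i]).
Local Notation f := (real_complex R).
Variable N : nat.
Variable P : 'M[R]_N.+1.
Hypothesis PT : P^T = P.
Let A : 'M[C]_N.+1 := map_mx f P.
Lemma Aherm : A \is hermsymmx.
Proof.
apply: realsym_hermsym.
  rewrite qualifE expr0 scale1r; apply/eqP.
  by rewrite map_mx_id // /A map_trmx PT.
by apply/mxOverP => i j; rewrite mxE /= complex_real.
Qed.
Let U := spectralmx A.
Let D := spectral_diag A.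
Lemma HA : A = invmx U *m diag_mx D *m U.
Proof. exact/orthomx_spectralP/hermitian_normalmx/Aherm. Qed.
Let dR i := complex.Re (D 0 i).
Lemma HD i : D 0 i = f (dR i).
Proof.
have /mxOverP/(_ 0 i) := hermitian_spectral_diag_real Aherm.
rewrite /dR; case: (D 0 i) => a b; rewrite complex_real => /eqP -> //.
Qed.
Let j := [arg max_(i > ord0) dR i]%O.
Lemma Hj i : dR i <= dR j.
Proof. rewrite /j; case: arg_maxP => // k _ H; exact: H. Qed.
Let rho := dR j.
Lemma Uunit : U \in unitmx.
Proof. exact: spectral_unit. Qed.
Lemma detA : \det (A - (f rho)%:M) = 0.
Proof.
apply/eqP/det0P; exists (delta_mx 0 j *m U).
  apply/negP => /eqP H.
  have := congr1 (fun X => (X *m invmx U) 0 j) H.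
  rewrite mul0mx mulmxK ?Uunit // !mxE !eqxx /=.
  by move/eqP; rewrite oner_eq0.
have := HA; rewrite /= => ->; rewrite mulmxBr !mulmxA.
rewrite mulmxK ?Uunit //.
have -> : (delta_mx 0 j : 'rV[C]_N.+1) *m diag_mx D = f rho *: delta_mx 0 j.
  apply/matrixP => a b; rewrite mul_mx_diag !mxE (ord1 a) eqxx /=.
  by case: (b =P j) => [->|_]; rewrite /= ?mul1r ?mul0r ?mulr1 ?mulr0 // HD.
by rewrite mul_mx_scalar -scalemxAl subrr.
Qed.
Lemma detP : \det (P - rho%:M) = 0.
Proof.
apply/eqP; rewrite -(fmorph_eq0 f) -det_map_mx map_mxB /= map_scalar_mx.
by rewrite -/A detA.
Qed.
Lemma eigP : exists k : 'cV[R]_N.+1, k != 0 /\ P *m k = rho *: k.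
Proof.
have /det0P [v vn0 Hv] := introT eqP detP.
exists v^T; split; first by rewrite trmx_eq0.
apply/eqP; rewrite -subr_eq0 -mul_scalar_mx -mulmxBl.
by rewrite -[P - _]trmxK linearB /= PT tr_scalar_mx -trmx_mul Hv trmx0.
Qed.
Lemma Uu : U \is unitarymx.
Proof. exact: spectral_unitarymx. Qed.
Lemma boundP (z : 'cV[R]_N.+1) : (z^T *m P *m z) 0 0 <= rho * (z^T *m z) 0 0.
Proof.
pose Z := map_mx f z.
have E1 : f ((z^T *m P *m z) 0 0) = (Z^T *m A *m Z) 0 0.
  by rewrite /Z map_trmx -!map_mxM [RHS]mxE.
have E2 : f ((z^T *m z) 0 0) = (Z^T *m Z) 0 0.
  by rewrite /Z map_trmx -!map_mxM [RHS]mxE.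
rewrite -lecR.
have -> : f (rho * (z^T *m z) 0 0) = f rho * f ((z^T *m z) 0 0) by rewrite rmorphM.
rewrite E1 E2.
have Zc : forall g : C -> C, (forall x : R, g (f x) = f x) -> map_mx g Z = Z.
  by move=> g Hg; apply/matrixP => a b; rewrite !mxE Hg.
have fc : forall x : R, (f x)^* = f x.
  by move=> x; rewrite conj_Creal //= complex_real.
have UU : (U ^t*)%sesqui *m U = 1%:M by apply: mulmx1C; apply/unitarymxP/Uu.
pose y := U *m Z.
have Ey : Z^T *m invmx U = (y ^t*)%sesqui.
  rewrite invmx_unitary ?Uu // /y -[in RHS]map_trmx map_mxM [map_mx _ Z](Zc _ fc) trmx_mul.
  by congr (_ *m _); rewrite map_trmx.
have E3 : Z^T *m Z = (y ^t*)%sesqui *m y.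
  by rewrite -Ey /y mulmxA mulmxKV ?Uunit.
have E4 : Z^T *m A *m Z = (y ^t*)%sesqui *m diag_mx D *m y.
  by have := HA; rewrite /= => ->; rewrite -Ey /y !mulmxA.
rewrite E4 E3 mul_mx_diag !mxE mulr_sumr.
apply: ler_sum => i _.
rewrite !mxE HD mulrAC [X in _ <= X]mulrC.
apply: ler_wpM2l; first by rewrite mulrC mul_conjC_ge0.
by rewrite lecR Hj.
Qed.
Lemma top_eig_sec : exists rho0 (k : 'cV[R]_N.+1), k != 0 /\ P *m k = rho0 *: k /\
  forall z, dot z (P *m z) <= rho0 * dot z z.
Proof.
have [k [kn0 Hk]] := eigP.
exists rho, k; split=> //; split=> // z.
by rewrite /dot mulmxA boundP.
Qed.
End TopEig.

Lemma top_eig (R : rcfType) N (P : 'M[R]_N.+1) : P^T = P ->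
  exists rho0 (k : 'cV[R]_N.+1), k != 0 /\ P *m k = rho0 *: k /\
  forall z, dot z (P *m z) <= rho0 * dot z z.
Proof. exact: top_eig_sec. Qed.



Definition eJ (R : rcfType) n : 'cV[R]_n.+1 := delta_mx ord_max 0.
Definition qJ (R : rcfType) n (z : 'cV[R]_n.+1) := dot z z - 2 * (dot (eJ R n) z) ^+ 2.

Lemma dot_mx1 (R : rcfType) n (a b : 'cV[R]_n) : a^T *m b = (dot a b)%:M.
Proof. by apply/matrixP => i j; rewrite (ord1 i) (ord1 j) [RHS]mxE eqxx mulr1n. Qed.

Section SLemma.
Variables (R : rcfType) (n : nat) (M : 'M[R]_n.+1).
Hypothesis MT : M^T = M.
Local Notation e := (eJ R n).
Hypothesis H : forall z, qJ z <= 0 -> dot z (M *m z) <= 0.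

Lemma ee : dot e e = 1.
Proof. by rewrite /dot /eJ trmx_delta mul_delta_mx mxE !eqxx /= mulr1n. Qed.

Definition Pi := (1%:M - e *m e^T : 'M[R]_n.+1).

Lemma PiT : Pi^T = Pi.
Proof. by rewrite /Pi linearB /= trmx1 trmx_mul trmxK. Qed.

Lemma Piz (z : 'cV[R]_n.+1) : Pi *m z = z - dot e z *: e.
Proof. by rewrite /Pi mulmxBl mul1mx -mulmxA dot_mx1 mul_mx_scalar. Qed.

Lemma eez (z : 'cV[R]_n.+1) : e *m e^T *m z = dot e z *: e.
Proof. by rewrite -mulmxA dot_mx1 mul_mx_scalar. Qed.

Lemma dot_e_Pi (z : 'cV[R]_n.+1) : dot e (Pi *m z) = 0.
Proof. by rewrite Piz dotBr dotZr ee mulr1 subrr. Qed.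

Lemma Pi_orth (z : 'cV[R]_n.+1) : dot e z = 0 -> Pi *m z = z.
Proof. by move=> h; rewrite Piz h scale0r subr0. Qed.

Variable c : R.
Definition Pt := Pi *m M *m Pi - c *: (e *m e^T).

Lemma PtT : Pt^T = Pt.
Proof.
by rewrite /Pt linearB /= !linearZ /= !trmx_mul trmxK PiT MT mulmxA.
Qed.

Lemma Pt_orth (w : 'cV[R]_n.+1) : dot e w = 0 -> Pt *m w = Pi *m (M *m w).
Proof.
move=> h; rewrite /Pt mulmxBl -scalemxAl eez h scale0r scaler0 subr0.
by rewrite -!mulmxA [Pi *m w]Pi_orth.
Qed.

Lemma dot_e_Pt (z : 'cV[R]_n.+1) : dot e (Pt *m z) = - c * dot e z.
Proof.
rewrite /Pt mulmxBl -scalemxAl eez dotBr !dotZr ee mulr1.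
by rewrite -!mulmxA dot_e_Pi sub0r mulNr.
Qed.

Variables (rho : R) (k : 'cV[R]_n.+1).
Hypotheses (Hk : Pt *m k = rho *: k) (kk : dot k k = 1) (ke : dot e k = 0)
  (Hbound : forall z, dot z (Pt *m z) <= rho * dot z z) (Hc : - c < rho).

Definition bv := Pi *m (M *m e).
Definition rr := dot e (M *m e).
Definition G mu : 'M[R]_n.+1 := mu%:M - Pt.
Definition vv mu := invmx (G mu) *m bv.
Definition yh mu := vv mu + e.
Definition Bf mu (x y : 'cV[R]_n.+1) :=
  mu * (dot x y - 2 * dot e x * dot e y) - dot x (M *m y).

Lemma GT mu : (G mu)^T = G mu.
Proof. by rewrite /G linearB /= tr_scalar_mx PtT. Qed.

Lemma Gz mu (z : 'cV[R]_n.+1) : G mu *m z = mu *: z - Pt *m z.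
Proof. by rewrite /G mulmxBl mul_scalar_mx. Qed.

Lemma Gpos mu (z : 'cV[R]_n.+1) : rho <= mu -> (mu - rho) * dot z z <= dot z (G mu *m z).
Proof.
move=> _; rewrite Gz dotBr dotZr; have := Hbound z; lra.
Qed.

Lemma Gunit mu : rho < mu -> G mu \in unitmx.
Proof.
move=> hmu; rewrite unitmxE unitfE; apply/negP => /det0P [w wn0 Hw].
have Hz : G mu *m w^T = 0 by rewrite -GT -trmx_mul Hw trmx0.
have := Gpos w^T (ltW hmu); rewrite Hz dot0r => h.
have h2 : dot w^T w^T = 0.
  have := dot_ge0 w^T; nra.
by move: wn0; rewrite -trmx_eq0 (dot_eq0 h2) eqxx.
Qed.

Lemma Gv mu : rho < mu -> G mu *m vv mu = bv.
Proof. by move=> h; rewrite /vv mulKVmx ?Gunit. Qed.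

Lemma dot_e_bv : dot e bv = 0.
Proof. by rewrite /bv dot_e_Pi. Qed.

Lemma dot_e_G mu (z : 'cV[R]_n.+1) : dot e (G mu *m z) = (mu + c) * dot e z.
Proof. by rewrite Gz dotBr dotZr dot_e_Pt; ring. Qed.

Lemma ev mu : rho < mu -> dot e (vv mu) = 0.
Proof.
move=> h; have := dot_e_G mu (vv mu); rewrite Gv // dot_e_bv => /esym /eqP.
rewrite mulf_eq0 => /orP [/eqP h2|/eqP //]; have := Hc; lra.
Qed.

Lemma dot_Pi_orth (w x : 'cV[R]_n.+1) : dot e w = 0 -> dot w (Pi *m x) = dot w x.
Proof. by move=> h; rewrite dot_mul PiT Pi_orth. Qed.

Lemma Bdecomp mu (w : 'cV[R]_n.+1) s : dot e w = 0 ->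
  Bf mu (w + s *: e) (w + s *: e) =
  dot w (G mu *m w) - 2 * s * dot w bv - s ^+ 2 * (mu + rr).
Proof.
move=> h.
have h1 : dot w (G mu *m w) = mu * dot w w - dot w (M *m w).
  by rewrite Gz dotBr dotZr Pt_orth // dot_Pi_orth.
have h2 : dot w bv = dot w (M *m e) by rewrite /bv dot_Pi_orth.
have h3 : dot e (M *m w) = dot w (M *m e) by rewrite dot_mulS.
have h4 : dot w e = 0 by rewrite dotC.
rewrite h1 h2 /Bf /rr !dotDl !dotDr !dotZl !dotZr !mulmxDr -!scalemxAr !dotDr !dotZr.
rewrite h h3 h4 ee; ring.
Qed.

Lemma z_decomp (z : 'cV[R]_n.+1) : z = Pi *m z + dot e z *: e.
Proof. by rewrite Piz subrK. Qed.

Lemma Bsq mu (z : 'cV[R]_n.+1) : rho < mu ->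
  (dot e z) ^+ 2 * Bf mu (yh mu) (yh mu) <= Bf mu z z.
Proof.
move=> hmu; set s := dot e z; set v := vv mu; set w := Pi *m z.
have we : dot e w = 0 by rewrite /w dot_e_Pi.
have ve : dot e v = 0 by rewrite /v ev.
have Hv : G mu *m v = bv by rewrite /v Gv.
have -> : yh mu = v + 1 *: e by rewrite /yh scale1r.
rewrite [in X in _ <= X](z_decomp z) -/s -/w !Bdecomp // Hv.
have := Gpos (w - s *: v) (ltW hmu).
rewrite mulmxBr -scalemxAr Hv !dotBl !dotBr !dotZl !dotZr.
have -> : dot v (G mu *m w) = dot w bv by rewrite dot_mulS ?GT // Hv.
have := dot_ge0 (w - s *: v); rewrite !dotBl !dotBr !dotZl !dotZr [dot v w]dotC => hX.
have : 0 <= (mu - rho) * (dot w w - s * dot w v - (s * dot w v - s * (s * dot v v))).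
  by apply: mulr_ge0 => //; lra.
lra.
Qed.

Lemma Bf_qJ mu (z : 'cV[R]_n.+1) : Bf mu z z = mu * qJ z - dot z (M *m z).
Proof. by rewrite /Bf /qJ expr2 mulrA. Qed.

Lemma qJ_yh mu : rho < mu -> qJ (yh mu) = dot (vv mu) (vv mu) - 1.
Proof.
move=> h; rewrite /qJ /yh !dotDl !dotDr [dot (vv mu) e]dotC ev // ee.
by rewrite add0r expr1n; ring.
Qed.

Lemma Bf_valid mu : rho < mu -> 0 <= Bf mu (yh mu) (yh mu) ->
  forall z, 0 <= Bf mu z z.
Proof.
move=> h h0 z; apply: le_trans (Bsq z h); apply: mulr_ge0 => //.
exact: sqr_ge0.
Qed.

Lemma vbound mu : rho < mu ->
  dot (vv mu) (vv mu) * (mu - rho) ^+ 2 <= dot bv bv.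
Proof.
move=> h; set v := vv mu; set d := mu - rho.
have h1 : d * dot v v <= dot v bv by rewrite -(Gv h) Gpos // ltW.
have h2 := dot_ge0 (d *: v - bv).
rewrite !dotBl !dotBr !dotZl !dotZr [dot bv v]dotC in h2.
have hd : 0 < d by rewrite /d subr_gt0.
have h3 : d * (d * dot v v) <= d * dot v bv by rewrite ler_wpM2l // ltW.
nra.
Qed.

Lemma kG mu : G mu *m k = (mu - rho) *: k.
Proof. by rewrite Gz Hk scalerBl. Qed.

Lemma kv mu : rho < mu -> dot k (vv mu) * (mu - rho) = dot k bv.
Proof.
by move=> h; rewrite -(Gv h) dot_mulS ?GT // kG dotZr dotC mulrC.
Qed.

Lemma CS (x : 'cV[R]_n.+1) : (dot k x) ^+ 2 <= dot x x.
Proof.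
have := dot_ge0 (x - dot k x *: k).
rewrite !dotBl !dotBr !dotZl !dotZr kk [dot x k]dotC.
move=> h; rewrite expr2; lra.
Qed.

Definition GX : 'M[{poly R}]_n.+1 := 'X%:M - map_mx polyC Pt.
Definition hX : {poly R} :=
  ((\adj GX *m map_mx polyC bv)^T *m (\adj GX *m map_mx polyC bv)) 0 0
  - (\det GX) ^+ 2.

Lemma adj_v mu : rho < mu -> \adj (G mu) *m bv = \det (G mu) *: vv mu.
Proof.
move=> h; have hu := Gunit h.
rewrite -[LHS](mulKmx hu) -[X in _ = X](mulKmx hu); congr (_ *m _).
by rewrite mulmxA mul_mx_adj mul_scalar_mx -scalemxAr Gv.
Qed.

Lemma hX_eval mu : rho < mu -> hX.[mu] = (\det (G mu)) ^+ 2 * qJ (yh mu).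
Proof.
move=> h; rewrite -horner_evalE /hX rmorphB rmorphXn /=.
have me : forall (m p : nat) (X : 'M[{poly R}]_(m, p)) i j,
    horner_eval mu (X i j) = (map_mx (horner_eval mu) X) i j.
  by move=> m p X i j; rewrite mxE.
have HG : map_mx (horner_eval mu) GX = G mu.
  rewrite /GX /G map_mxB /= map_scalar_mx /= horner_evalE hornerX; congr (_ - _).
  by apply/matrixP => i j; rewrite !mxE /= horner_evalE hornerC.
have Hb : map_mx (horner_eval mu) (map_mx polyC bv) = bv.
  by apply/matrixP => i j; rewrite !mxE /= horner_evalE hornerC.
rewrite me map_mxM -map_trmx map_mxM map_mx_adj HG Hb -det_map_mx HG.
rewrite -/(dot _ _) adj_v // dotZl dotZr qJ_yh //; ring.
Qed.

Lemma alpha_case mu1 : rho < mu1 -> 0 <= qJ (yh mu1) ->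
  exists mu0, rho < mu0 /\ qJ (yh mu0) = 0.
Proof.
move=> h1 q1; set mu2 := mu1 + dot bv bv + 1.
have bb0 := dot_ge0 bv.
have h2 : rho < mu2 by rewrite /mu2; lra.
have q2 : qJ (yh mu2) < 0.
  rewrite qJ_yh //; have := vbound h2.
  have : dot bv bv + 1 <= mu2 - rho by rewrite /mu2; lra.
  have := dot_ge0 (vv mu2); set x := dot (vv mu2) _; set d := mu2 - rho.
  move=> x0 hd hb.
  have hd2 : (dot bv bv + 1) ^+ 2 <= d ^+ 2.
    by rewrite ler_pXn2r // ?nnegrE; lra.
  nra.
have dn0 : forall mu, rho < mu -> 0 < (\det (G mu)) ^+ 2.
  move=> mu h; rewrite exprn_even_gt0 //=.
  by have := Gunit h; rewrite unitmxE unitfE.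
have := @poly_ivt R (- hX) mu1 mu2.
rewrite !hornerN !hX_eval //.
have -> : mu1 <= mu2 by rewrite /mu2; lra.
move=> /(_ isT) [].
  have := dn0 _ h1; have := dn0 _ h2; set a := (\det _) ^+ 2; set b := (\det _) ^+ 2.
  move=> hb ha; apply/andP; split; last by rewrite oppr_ge0; nra.
  by rewrite oppr_le0; apply: mulr_ge0 => //; lra.
move=> mu0 /andP [m1 m2] /rootP; rewrite hornerN hX_eval; last by lra.
move=> /eqP; rewrite oppr_eq0 mulf_eq0 => /orP [|/eqP q0].
  by have := dn0 mu0 (lt_le_trans h1 m1); move=> /lt0r_neq0 /negPf ->.
by exists mu0; split => //; lra.
Qed.

Lemma Mkk : dot k (M *m k) = rho.
Proof. by rewrite -(dot_Pi_orth _ ke) -Pt_orth // Hk dotZr kk mulr1. Qed.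

Lemma Mvk mu : rho < mu -> dot (vv mu) (M *m k) = rho * dot (vv mu) k.
Proof. by move=> h; rewrite -(dot_Pi_orth _ (ev h)) -Pt_orth // Hk dotZr. Qed.

Lemma Mek : dot e (M *m k) = dot k bv.
Proof. by rewrite dot_mulS // /bv dot_Pi_orth. Qed.

Lemma beta_bound mu : rho < mu -> dot k bv = 0 ->
  qJ (yh mu) < 0 -> - (mu - rho) <= Bf mu (yh mu) (yh mu).
Proof.
move=> h kb qn.
have kv0 : dot k (vv mu) = 0.
  have := kv h; rewrite kb => /eqP; rewrite mulf_eq0 => /orP [/eqP //|/eqP h0]; lra.
set y := yh mu; set t := Num.sqrt (- qJ y).
have t2 : t ^+ 2 = - qJ y by rewrite sqr_sqrtr // oppr_ge0 ltW.
have yk : dot y k = 0 by rewrite /y /yh dotDl [dot e k]ke [dot _ k]dotC kv0 addr0.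
have Myk : dot y (M *m k) = 0.
  by rewrite /y /yh dotDl Mvk // Mek kb [dot _ k]dotC kv0 mulr0 addr0.
have qy : qJ y = dot (vv mu) (vv mu) - 1 by rewrite /y qJ_yh.
clearbody y t.
pose z := y + t *: k.
have ez : dot e z = dot e y by rewrite /z dotDr dotZr ke mulr0 addr0.
have qz : qJ z = 0.
  rewrite /qJ ez /z !dotDl !dotDr !dotZl !dotZr yk [dot k y]dotC yk kk.
  rewrite /qJ in t2; rewrite expr2 in t2; lra.
have Mz : dot z (M *m z) = dot y (M *m y) + t ^+ 2 * rho.
  rewrite /z mulmxDr -scalemxAr !dotDl !dotDr !dotZl !dotZr Myk Mkk.
  rewrite [dot k (M *m y)]dot_mulS // Myk; ring.
have := H (z := z); rewrite qz lexx => /(_ isT); rewrite Mz => hz.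
rewrite Bf_qJ; have vge := dot_ge0 (vv mu).
nra.
Qed.

Lemma exists_valid : exists mu0, forall z, 0 <= Bf mu0 z z.
Proof.
case: (Classical_Prop.classic (exists mu1, rho < mu1 /\ 0 <= qJ (yh mu1))).
  move=> [mu1 [h1 q1]]; have [mu0 [h0 q0]] := alpha_case h1 q1.
  exists mu0; apply: Bf_valid => //.
  rewrite Bf_qJ q0 mulr0 sub0r oppr_ge0; apply: H; rewrite q0 //.
move=> Hn.
have neg : forall mu, rho < mu -> qJ (yh mu) < 0.
  move=> mu h; rewrite ltNge; apply/negP => q; apply: Hn; by exists mu.
have kb : dot k bv = 0.
  case: (eqVneq (dot k bv) 0) => // kbn; exfalso.
  have h1 : rho < rho + `|dot k bv| by rewrite ltrDl normr_gt0.
  have := neg _ h1; rewrite qJ_yh //.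
  have := CS (vv (rho + `|dot k bv|)); have := kv h1.
  have e1 : rho + `|dot k bv| - rho = `|dot k bv| by rewrite addrC addKr.
  rewrite e1; set a := dot k (vv _) => ha.
  have : a ^+ 2 = 1.
    have : a ^+ 2 * `|dot k bv| ^+ 2 = (dot k bv) ^+ 2 by rewrite -exprMn ha.
    rewrite real_normK ?num_real // => hh.
    have hp : 0 < (dot k bv) ^+ 2 by rewrite exprn_even_gt0.
    by apply: (mulIf (lt0r_neq0 hp)); rewrite mul1r.
  lra.
exists rho => z.
apply/negP => /negP; rewrite -ltNge => hX.
set X := Bf rho z z in hX.
set D := `|dot z z - (dot e z) ^+ 2|.
have D0 : 0 <= D by apply: normr_ge0.
set eps := - X / (2 * (D + 1)).
have epos : 0 < eps by rewrite /eps divr_gt0 //; lra.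
have heps : eps * (2 * (D + 1)) = - X by rewrite /eps mulfVK //; lra.
have hmu : rho < rho + eps by lra.
have hb := beta_bound hmu kb (neg _ hmu).
have hsq := Bsq z hmu.
have hqz : Bf (rho + eps) z z = X + eps * qJ z by rewrite /X !Bf_qJ; ring.
have hq : qJ z = (dot z z - (dot e z) ^+ 2) - (dot e z) ^+ 2 by rewrite /qJ; ring.
have hD : dot z z - (dot e z) ^+ 2 <= D by apply: ler_norm.
have s2 := sqr_ge0 (dot e z).
rewrite addrC addKr in hb.
nra.
Qed.
End SLemma.

Lemma dot_delta (R : rcfType) n (i : 'I_n) (z : 'cV[R]_n) : dot (delta_mx i 0) z = z i 0.
Proof.
rewrite dotE (bigD1 i) //= big1 ?addr0 => [|j /negPf ji]; first by rewrite mxE !eqxx mul1r.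
by rewrite mxE ji mul0r.
Qed.

Lemma slemmaJ (R : rcfType) n (M : 'M[R]_n.+1) : M^T = M ->
  (forall z, qJ z <= 0 -> dot z (M *m z) <= 0) ->
  exists mu, 0 <= mu /\ forall z, dot z (M *m z) <= mu * qJ z.
Proof.
move=> MT H.
have [mu0 Hmu0] : exists mu0, forall z, dot z (M *m z) <= mu0 * qJ z.
  case: n M MT H => [|n'] M MT H.
    exists 0 => z; rewrite mul0r; apply: H.
    rewrite /qJ /eJ dot_delta dotE big_ord1 (_ : ord_max = 0) ?expr2 //; last first.
      by apply/val_inj.
    by rewrite -!expr2; have := sqr_ge0 (z 0 0); lra.
  pose e := eJ R n'.+1.
  pose w0 : 'cV[R]_n'.+2 := delta_mx 0 0.
  have ew0 : dot e w0 = 0 by rewrite /e /eJ dot_delta /w0 mxE.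
  have w0w0 : dot w0 w0 = 1 by rewrite /w0 dot_delta mxE !eqxx.
  pose c := 1 - dot w0 (M *m w0).
  have [rho [k0 [k0n0 [Hk0 Hb0]]]] := top_eig (PtT MT c).
  have Hc : - c < rho.
    have := Hb0 w0; rewrite w0w0 mulr1 Pt_orth // dot_Pi_orth // /c; lra.
  have ke0 : dot e k0 = 0.
    have := dot_e_Pt M c k0; rewrite Hk0 dotZr => /eqP; rewrite -subr_eq0 -mulrBl.
    rewrite mulf_eq0 => /orP [/eqP h|/eqP //]; lra.
  have kpos : 0 < dot k0 k0.
    rewrite lt_def dot_ge0 andbT; apply/negP => /eqP h.
    by move: k0n0; rewrite (dot_eq0 h) eqxx.
  pose k := (Num.sqrt (dot k0 k0))^-1 *: k0.
  have kk : dot k k = 1.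
    rewrite /k dotZl dotZr mulrA -expr2 exprVn sqr_sqrtr ?ltW //.
    by rewrite mulVf // lt0r_neq0.
  have ke : dot e k = 0 by rewrite /k dotZr ke0 mulr0.
  have Hk : Pt M c *m k = rho *: k by rewrite /k -scalemxAr Hk0 !scalerA mulrC.
  have [mu0 Hmu0] := exists_valid MT H Hk kk ke Hb0 Hc.
  exists mu0 => z; have := Hmu0 z; rewrite Bf_qJ; lra.
case: (lerP 0 mu0) => hm.
  by exists mu0.
exists 0; split => // z; rewrite mul0r.
case: (lerP (qJ z) 0) => hq; first exact: H.
have := Hmu0 z; nra.
Qed.

Lemma dot_suml (R : rcfType) n (I : finType) (F : I -> 'cV[R]_n) x :
  dot (\sum_i F i) x = \sum_i dot (F i) x.
Proof.
rewrite dotE (eq_bigr (fun j => \sum_i F i j 0 * x j 0)); last first.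
  by move=> j _; rewrite summxE mulr_suml.
by rewrite exchange_big /=; apply: eq_bigr => i _; rewrite dotE.
Qed.

Lemma dot_sumr (R : rcfType) n (I : finType) (F : I -> 'cV[R]_n) x :
  dot x (\sum_i F i) = \sum_i dot x (F i).
Proof. by rewrite dotC dot_suml; apply: eq_bigr => i _; rewrite dotC. Qed.

Section Coords.
Variables (R : rcfType) (n : nat) (Q : 'M[R]_n.+1) (lam : 'I_n.+1 -> R)
  (u : 'I_n.+1 -> 'cV[R]_n.+1).
Hypotheses (QT : Q^T = Q) (lpos : forall i, i != ord_max -> 0 < lam i)
  (lneg : lam ord_max < 0)
  (orth : forall i j, (u i)^T *m u j = (i == j)%:R%:M)
  (eig : forall i, Q *m u i = lam i *: u i).

Lemma uu i j : dot (u i) (u j) = (i == j)%:R.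
Proof. by rewrite /dot orth mxE eqxx mulr1n. Qed.

Lemma lam_neq0 i : lam i != 0.
Proof.
case: (eqVneq i ord_max) => [->|h]; first exact: ltr0_neq0.
by rewrite lt0r_neq0 // lpos.
Qed.

Definition sq i := Num.sqrt `|lam i|.

Lemma sq_gt0 i : 0 < sq i.
Proof. by rewrite /sq sqrtr_gt0 normr_gt0 lam_neq0. Qed.

Lemma sq2 i : sq i ^+ 2 = `|lam i|.
Proof. by rewrite /sq sqr_sqrtr. Qed.

Definition Sm : 'M[R]_n.+1 := \matrix_(a, j) (u j a 0 / sq j).
Definition Tm : 'M[R]_n.+1 := \matrix_(j, a) (sq j * u j a 0).
Definition Um : 'M[R]_n.+1 := \matrix_(a, j) u j a 0.

Lemma UTU : Um^T *m Um = 1%:M.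
Proof.
apply/matrixP => i j; rewrite /Um !mxE -uu dotE; apply: eq_bigr => a _.
by rewrite !mxE.
Qed.

Lemma ST : Sm *m Tm = 1%:M.
Proof.
rewrite -(mulmx1C UTU); apply/matrixP => a b; rewrite /Sm /Tm /Um !mxE.
apply: eq_bigr => j _; rewrite !mxE.
have := sq_gt0 j => hs; field; exact: lt0r_neq0.
Qed.

Lemma Sz (z : 'cV[R]_n.+1) : Sm *m z = \sum_j (z j 0 / sq j) *: u j.
Proof.
apply/matrixP => a b; rewrite (ord1 b) summxE !mxE; apply: eq_bigr => j _.
by rewrite /Sm !mxE; ring.
Qed.

Lemma dot_lin (a b : 'I_n.+1 -> R) :
  dot (\sum_j a j *: u j) (\sum_j b j *: u j) = \sum_j a j * b j.
Proof.
rewrite dot_suml; apply: eq_bigr => i _; rewrite dot_sumr (bigD1 i) //= big1.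
  by rewrite dotZl dotZr uu eqxx mulr1 addr0 mulrC.
by move=> j ji; rewrite dotZl dotZr uu eq_sym (negPf ji) !mulr0.
Qed.

Lemma Q_lin (a : 'I_n.+1 -> R) :
  Q *m (\sum_j a j *: u j) = \sum_j (a j * lam j) *: u j.
Proof.
rewrite mulmx_sumr; apply: eq_bigr => j _.
by rewrite -scalemxAr eig scalerA.
Qed.

Lemma qS (z : 'cV[R]_n.+1) : dot (Sm *m z) (Q *m (Sm *m z)) = qJ z.
Proof.
rewrite Sz Q_lin dot_lin /qJ /eJ dot_delta dotE.
rewrite (bigD1 ord_max) //= [X in _ = X - _](bigD1 ord_max) //=.
have -> : \sum_(i < n.+1 | i != ord_max) z i 0 / sq i * (z i 0 / sq i * lam i) =
          \sum_(i < n.+1 | i != ord_max) z i 0 * z i 0.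
  apply: eq_bigr => i hi; have := sq2 i; rewrite gtr0_norm ?lpos // => h.
  rewrite -h; have := sq_gt0 i => hs; field; exact: lt0r_neq0.
have := sq2 ord_max; rewrite ltr0_norm // => h.
have hs := sq_gt0 ord_max.
have -> : z ord_max 0 / sq ord_max * (z ord_max 0 / sq ord_max * lam ord_max) =
          - (z ord_max 0 * z ord_max 0).
  rewrite -[lam _]opprK -h; field; exact: lt0r_neq0.
by rewrite expr2; ring.
Qed.

Lemma unS (z : 'cV[R]_n.+1) : dot (u ord_max) (Sm *m z) = z ord_max 0 / sq ord_max.
Proof.
rewrite Sz dot_sumr (bigD1 ord_max) //= big1.
  by rewrite dotZr uu eqxx mulr1 addr0.
by move=> j ji; rewrite dotZr uu eq_sym (negPf ji) mulr0.
Qed.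

Lemma STx (x : 'cV[R]_n.+1) : Sm *m (Tm *m x) = x.
Proof. by rewrite mulmxA ST mul1mx. Qed.

Lemma pos_orth (x : 'cV[R]_n.+1) : dot x (u ord_max) = 0 ->
  0 <= dot x (Q *m x) /\ (dot x (Q *m x) = 0 -> x = 0).
Proof.
move=> h; rewrite -(STx x); set z := Tm *m x.
have hz : z ord_max 0 = 0.
  move: h; rewrite -{1}(STx x) -/z dotC unS => /eqP; rewrite mulf_eq0 invr_eq0.
  by rewrite (negPf (lt0r_neq0 (sq_gt0 _))) orbF => /eqP.
rewrite qS /qJ /eJ dot_delta hz expr0n /= mulr0 subr0; split; first exact: dot_ge0.
by move=> /dot_eq0 ->; rewrite mulmx0.
Qed.


Variable A : 'M[R]_n.+1.
Hypothesis Qu : Q \in unitmx.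
Local Notation un := (u ord_max).
Local Notation lm := (lam ord_max).
Local Notation qf x := (dot x (Q *m x)).

Lemma bilQ (x y : 'cV[R]_n.+1) : bilin x Q y = dot x (Q *m y).
Proof. exact: form_dot. Qed.

Lemma Qun (x : 'cV[R]_n.+1) : dot x (Q *m un) = lm * dot x un.
Proof. by rewrite eig dotZr. Qed.

Lemma CLiff x : CL Q un x <-> qf x <= 0 /\ 0 <= dot x un.
Proof. by rewrite /CL !bilQ Qun nmulr_rle0. Qed.

Lemma qN (x : 'cV[R]_n.+1) : qf (- x) = qf x.
Proof. by rewrite mulmxN dotNl dotNr opprK. Qed.

Lemma Qsym (x z : 'cV[R]_n.+1) : dot z (Q *m x) = dot x (Q *m z).
Proof. exact: dot_mulS. Qed.

Lemma zero_of (z : 'cV[R]_n.+1) : qf z <= 0 -> dot z un = 0 -> z = 0.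
Proof.
move=> h1 h2; have [p1 p2] := pos_orth h2; apply: p2.
by apply/eqP; rewrite eq_le h1 p1.
Qed.

Lemma cone (x z : 'cV[R]_n.+1) : qf x <= 0 -> 0 <= dot x un ->
  qf z <= 0 -> 0 <= dot z un -> dot x (Q *m z) <= 0.
Proof.
move=> qx ax qz cz.
case: (eqVneq (dot z un) 0) => [c0|c0].
  by rewrite (zero_of qz c0) mulmx0 dot0r.
case: (eqVneq (dot x un) 0) => [a0|a0].
  by rewrite (zero_of qx a0) dot0l.
have cp : 0 < dot z un by rewrite lt_def c0 cz.
have ap : 0 < dot x un by rewrite lt_def a0 ax.
set t := dot x un / dot z un.
have tp : 0 < t by rewrite divr_gt0.
have hv : dot (x - t *: z) un = 0.
  by rewrite dotBl dotZl /t divfK ?subrr // lt0r_neq0.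
have [p _] := pos_orth hv.
move: p; rewrite mulmxBr -scalemxAr !dotBl !dotBr !dotZl !dotZr [dot z (Q *m x)]Qsym.
move=> p.
have : 0 <= t * (t * qf z) - 2 * t * dot x (Q *m z) + qf x by lra.
have h3 : t * (t * qf z) <= 0 by rewrite pmulr_rle0 // pmulr_rle0.
move=> h4.
have : 2 * t * dot x (Q *m z) <= 0 by lra.
by rewrite pmulr_rle0 // mulr_gt0.
Qed.

Definition condsD := exists mu : R, 0 <= mu /\
      nsd (A^T *m Q *m A - mu *: Q) /\
      0 <= bilin un A un /\
      bilin un (A *m invmx Q *m A^T) un <= 0.

Lemma qA (x : 'cV[R]_n.+1) : dot x ((A^T *m Q *m A) *m x) = qf (A *m x).
Proof. by rewrite -!mulmxA dot_mul trmxK. Qed.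

Lemma nsd_iff mu : nsd (A^T *m Q *m A - mu *: Q) <->
  forall x, qf (A *m x) <= mu * qf x.
Proof.
have sym : (A^T *m Q *m A - mu *: Q)^T = A^T *m Q *m A - mu *: Q.
  by rewrite linearB /= linearZ /= !trmx_mul trmxK QT mulmxA.
have e x : bilin x (A^T *m Q *m A - mu *: Q) x = qf (A *m x) - mu * qf x.
  by rewrite /bilin form_dot mulmxBl -scalemxAl dotBr dotZr qA.
split; first by move=> [_ h] x; have := h x; rewrite e; lra.
by move=> h; split => // x; rewrite e; have := h x; lra.
Qed.

Lemma c3_eq : bilin un (A *m invmx Q *m A^T) un =
  qf (invmx Q *m (A^T *m un)).
Proof.
by rewrite /bilin form_dot mulKVmx // -!mulmxA dot_mul dotC.
Qed.

Lemma dQy (x : 'cV[R]_n.+1) : dot (Q *m (invmx Q *m (A^T *m un))) x = dot (A *m x) un.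
Proof. by rewrite mulKVmx // dotC dot_mul trmxK dotC. Qed.

Lemma forward : invariant_set (CL Q un) A -> condsD.
Proof.
move=> Hinv.
have Hi : forall x, qf x <= 0 -> 0 <= dot x un ->
    qf (A *m x) <= 0 /\ 0 <= dot (A *m x) un.
  by move=> x h1 h2; apply/CLiff/Hinv/CLiff.
have H1 : forall x, qf x <= 0 -> qf (A *m x) <= 0.
  move=> x hx; case: (lerP 0 (dot x un)) => h; first by case: (Hi x hx h).
  have := Hi (- x); rewrite qN dotNl oppr_ge0 mulmxN qN => /(_ hx (ltW h)) [] //.
pose M' := Sm^T *m (A^T *m Q *m A) *m Sm.
have M'T : M'^T = M' by rewrite /M' !trmx_mul !trmxK QT !mulmxA.
have M'e z : dot z (M' *m z) = qf (A *m (Sm *m z)).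
  by rewrite /M' -!mulmxA dot_mul trmxK -qA !mulmxA.
have HS : forall z, qJ z <= 0 -> dot z (M' *m z) <= 0.
  by move=> z hz; rewrite M'e; apply: H1; rewrite qS.
have [mu [mu0 Hmu]] := slemmaJ M'T HS.
  exists mu; split => //; split.
    apply/nsd_iff => x; rewrite -(STx x) -M'e qS //; exact: Hmu.
  split.
    have /Hinv /CLiff [_] : CL Q un un.
      by apply/CLiff; rewrite Qun uu eqxx mulr1 ler01; split => //; apply: ltW.
    by rewrite /bilin form_dot dotC.
  rewrite c3_eq; set y := invmx Q *m (A^T *m un).
  have Hy : forall x, qf x <= 0 -> 0 <= dot x un -> 0 <= dot (Q *m y) x.
    by move=> x h1 h2; rewrite dQy; case: (Hi x h1 h2).
  rewrite leNgt; apply/negP => qy.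
  set g := dot y un; pose y' := y - g *: un.
  have y'u : dot y' un = 0 by rewrite /y' dotBl dotZl uu eqxx mulr1 subrr.
  have Ey : y = y' + g *: un by rewrite /y' subrK.
  clearbody y'.
  have [a0 _] := pos_orth y'u; set a := qf y' in a0.
  have Qy'u : dot y' (Q *m un) = 0 by rewrite Qun y'u mulr0.
  have hyy : qf y = a + lm * g ^+ 2.
    rewrite Ey mulmxDr -scalemxAr !dotDl !dotDr !dotZl !dotZr Qy'u [dot un (Q *m y')]Qsym Qy'u.
    by rewrite Qun uu eqxx mulr1 /a; ring.
  set b := Num.sqrt (a / - lm).
  have b0 : 0 <= b by apply: sqrtr_ge0.
  have b2 : b ^+ 2 * (- lm) = a.
    rewrite sqr_sqrtr; last by rewrite divr_ge0 // oppr_ge0 ltW.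
    by rewrite divfK // oppr_eq0 ltr0_neq0.
  pose x := - y' + b *: un.
  have xu : dot x un = b by rewrite /x dotDl dotNl y'u dotZl uu eqxx mulr1 oppr0 add0r.
  have qx : qf x = 0.
    rewrite /x mulmxDr mulmxN -scalemxAr !dotDl !dotDr !dotNl !dotNr !dotZl !dotZr.
    rewrite Qy'u [dot un (Q *m y')]Qsym Qy'u Qun uu eqxx mulr1 -/a; lra.
  have := Hy x; rewrite qx lexx xu => /(_ isT b0).
  rewrite dotC Qsym /x mulmxDr mulmxN -scalemxAr dotDr dotNr dotZr Qun -/g.
  have -> : dot y (Q *m y') = a.
    by rewrite {1}Ey dotDl dotZl Qsym Qy'u mulr0 addr0.
  move=> hfin.
  have ha : a > - lm * g ^+ 2 by lra.
  have hL : 0 < - lm by rewrite oppr_gt0.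
  have hsq : (b * lm * g) ^+ 2 = a * (- lm) * g ^+ 2.
    by rewrite !exprMn -b2; ring.
  have gg := sqr_ge0 g.
  have ap : 0 < a by nra.
  have hlt : (b * lm * g) ^+ 2 < a ^+ 2.
    by rewrite hsq [a ^+ 2]expr2 -mulrA ltr_pM2l.
  have hg : a <= b * (lm * g) by lra.
  have : a ^+ 2 <= (b * lm * g) ^+ 2.
    rewrite -mulrA ler_pXn2r ?nnegrE //; lra.
  lra.
Qed.

Lemma backward : condsD -> invariant_set (CL Q un) A.
Proof.
move=> [mu [mu0 [/nsd_iff Hn [c2 c3]]]] x /CLiff [qx ax]; apply/CLiff; split.
  by apply: le_trans (Hn x) _; apply: mulr_ge0_le0.
rewrite c3_eq in c3; set y := invmx Q *m (A^T *m un) in c3.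
rewrite -dQy -/y.
have yu : dot y un * lm = dot un (A *m un).
  by rewrite mulrC -Qun Qsym dotC dQy dotC.
have yun : dot y un <= 0.
  have h : 0 <= dot y un * lm by rewrite yu; move: c2; rewrite /bilin form_dot.
  have := lneg; nra.
have := cone qx ax (z := - y); rewrite qN dotNl oppr_ge0 => /(_ c3 yun).
by rewrite mulmxN dotNr oppr_le0 dotC.
Qed.

Lemma CL_negCL : invariant_set (CL Q un) A <-> invariant_set (negCL Q un) A.
Proof.
split => h x.
  by rewrite /negCL -mulmxN; apply: h.
by move=> hx; have := h (- x); rewrite /negCL mulmxN !opprK => /(_ hx).
Qed.
End Coords.

Unset Implicit Arguments.

(* Dimension is n.+1 (so n+1 >= 1); the distinguished index "n" of the paper is ord_max. *)
Theorem theorem3p18 (R : rcfType) (n : nat) (Q : 'M[R]_n.+1)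
  (lam : 'I_n.+1 -> R) (u : 'I_n.+1 -> 'cV[R]_n.+1) (A : 'M[R]_n.+1) :
  Q^T = Q ->
  Q \in unitmx ->
  (forall i j : 'I_n.+1, (i <= j)%N -> lam j <= lam i) ->
  (forall i : 'I_n.+1, i != ord_max -> 0 < lam i) ->
  lam ord_max < 0 ->
  (forall i j : 'I_n.+1, (u i)^T *m u j = (i == j)%:R%:M) ->
  (forall i : 'I_n.+1, Q *m u i = lam i *: u i) ->
  let un := u ord_max in
  let conds := exists mu : R, 0 <= mu /\
      nsd (A^T *m Q *m A - mu *: Q) /\
      0 <= bilin un A un /\
      bilin un (A *m invmx Q *m A^T) un <= 0 in
  (invariant_set (CL Q un) A <-> conds) /\ (invariant_set (negCL Q un) A <-> conds).
Proof.
move=> QT Qu _ lpos lneg orth eig un conds.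
have E : invariant_set (CL Q un) A <-> conds.
  split.
    exact: (forward QT lpos lneg orth eig Qu).
  exact: (backward QT lpos lneg orth eig Qu).
split; first exact: E.
split => h; first by apply/E; apply/CL_negCL.
by apply/CL_negCL; apply/E.
Qed.
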